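(* Let $d,n\in\mathbb{N}$ and $N=\binom{n+d-1}{n}$. (I) If the matrix $(v_1,\dots,v_N)\in\mathbb{R}^{d\times N}$ is random with a density with respect to Lebesgue measure on $\mathbb{R}^{d\times N}$ (in particular such $v_i$ exist), then almost surely the following holds: for every polynomial $p\in\mathbb{R}[x_1,\dots,x_d]$ of degree $n$ (order $n$), $p\equiv0$ if and only if $p(\lambda v_i)=0$ for all $\lambda\in\mathbb{R}$ and all $i=1,\dots,N$. (II) The number $N$ is optimal: for any $M<N$ and any $v_1,\dots,v_M\in\mathbb{R}^d$ there exists a non-zero polynomial $p\in\mathbb{R}[x_1,\dots,x_d]$ of degree $n$ such that $p(\lambda v_i)=0$ for all $\lambda\in\mathbb{R}$ and all $i=1,\dots,M$. *)

(* Defs.v *)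
From HB Require Import structures.
From mathcomp Require Import all_boot all_order all_algebra.
From mathcomp Require Import all_classical all_reals all_analysis.
From mathcomp Require mpoly.
Import (canonicals, coercions) mpoly.
Set Implicit Arguments.
Unset Strict Implicit.
Unset Printing Implicit Defensive.
Import Order.TTheory GRing.Theory Num.Theory.
Local Open Scope classical_set_scope.
Local Open Scope ring_scope.

Notation rpoly d R := (mpoly.mpoly d R).

(** [msize_ p] = 1 + total degree of p (0 if p = 0): multinomials' msize. *)
Definition msize_ (d : nat) (R : realType) (p : rpoly d R) : nat :=
  mpoly.msize p.

Definition eval_line (d : nat) (R : realType) (p : rpoly d R)
    (lam : R) (v : d.-tuple R) : R :=
  mpoly.meval (fun j : 'I_d => lam * tnth v j) p.

Definition vanishes_on_lines (d M : nat) (R : realType) (p : rpoly d R)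
    (V : M.-tuple (d.-tuple R)) : Prop :=
  forall (lam : R) (i : 'I_M), eval_line p lam (tnth V i) = 0.

Definition determining (d n N : nat) (R : realType)
    (V : N.-tuple (d.-tuple R)) : Prop :=
  forall p : rpoly d R, (msize_ p <= n.+1)%N ->
    (p = 0 <-> vanishes_on_lines p V).

(** The k-fold product of a (set function) measure mu on T, as a set function
    on k-tuples, defined by iterated integration of sections exactly as
    MathComp-Analysis' binary product [m1 \x m2]:
      mu^{(0)} = dirac at the empty tuple,
      mu^{(k+1)}(A) = \int mu^{(k)}({t | x :: t \in A}) dmu(x). *)
Fixpoint tuple_measure (dT : measure_display) (T : measurableType dT)
    (R : realType) (mu : set T -> \bar R) (k : nat)
    : set (k.-tuple T) -> \bar R :=
  match k return set (k.-tuple T) -> \bar R with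
  | 0%N => fun A => if `[< A [tuple] >] then 1%E else 0%E
  | k'.+1 => fun A =>
      (\int[mu]_x tuple_measure mu [set t : k'.-tuple T | A (cons_tuple x t)])%E
  end.

Definition lebesgue_vec (R : realType) (d : nat) : set (d.-tuple R) -> \bar R :=
  @tuple_measure _ (measurableTypeR R) R (@lebesgue_measure R) d.

Definition lebesgue_mat (R : realType) (d N : nat)
    : set (N.-tuple (d.-tuple R)) -> \bar R :=
  @tuple_measure _ (d.-tuple (measurableTypeR R)) R (@lebesgue_vec R d) N.

Definition has_density (dO : measure_display) (Omega : measurableType dO)
    (dS : measure_display) (S : measurableType dS) (R : realType)
    (P : probability Omega R) (X : Omega -> S) (lam : set S -> \bar R) : Prop :=
  exists f : S -> R,
    (forall s, 0 <= f s) /\ measurable_fun setT f /\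
    forall A : set S, measurable A ->
      P (X @^-1` A) = (\int[lam]_(s in A) (f s)%:E)%E.

(* Main.v *)
Require Import Defs.
From HB Require Import structures.
From mathcomp Require Import all_boot all_order all_algebra.
From mathcomp Require Import all_classical all_reals all_analysis.
From mathcomp Require mpoly.
Import (canonicals, coercions) mpoly.
Import Order.TTheory GRing.Theory Num.Theory.
Local Open Scope classical_set_scope.
Local Open Scope ring_scope.

Import HBNNSimple.

Section generic_int.
Context (dT : measure_display) (T : measurableType dT) (R : realType).
Implicit Types (mu : set T -> \bar R).

Lemma sint0 mu (E : set T) (h : {nnsfun T >-> R}) :
  (forall B, measurable B -> B `<=` E -> mu B = 0%E) ->
  (forall x, h x != 0 -> E x) -> sintegral mu h = 0%E.
Proof.
move=> hmu hE; rewrite /sintegral; apply: fsbig1 => y _.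
have [->|y0] := eqVneq y 0; first by rewrite mul0e.
have mh : measurable (h @^-1` [set y]).
  have := @measurable_funP _ _ _ _ setT h measurableT [set y] (measurable_set1 y).
  by rewrite setTI.
rewrite hmu ?mule0 //.
by move=> x /= hx; apply: hE; rewrite hx.
Qed.

Lemma sup0 mu (E : set T) (f : T -> \bar R) :
  (forall B, measurable B -> B `<=` E -> mu B = 0%E) ->
  (forall x, (0 <= f x)%E) -> (forall x, f x != 0%E -> E x) ->
  ereal_sup [set sintegral mu h | h in [set h : {nnsfun T >-> R} | forall x, ((h x)%:E <= f x)%E]] = 0%E.
Proof.
move=> hmu f0 fE.
rewrite (_ : [set _ | h in _] = [set 0%E]) ?ereal_sup1 //.
apply/seteqP; split => [_ [h hf <-]|_ ->] /=.
  apply: (@sint0 mu E h hmu) => x hx; apply: fE.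
  have hx0 : 0 < h x by rewrite lt0r hx /=.
  by apply/eqP => fx0; have := hf x; rewrite fx0 lee_fin leNgt hx0.
exists nnsfun0 => //=; last by apply: (@sint0 _ _ nnsfun0 hmu) => x /=; rewrite eqxx.
Qed.


Lemma int0 mu (D E : set T) (phi : T -> \bar R) :
  (forall B, measurable B -> B `<=` E -> mu B = 0%E) ->
  (forall x, D x -> phi x != 0%E -> E x) -> (\int[mu]_(x in D) phi x = 0)%E.
Proof.
move=> hmu hE; rewrite /integral /=.
have key : forall x, (phi \_ D) x != 0%E -> E x.
  move=> x; rewrite patchE; case: ifPn => [/set_mem Dx|_]; first exact: hE.
  by rewrite eqxx.
rewrite !(@sup0 _ _ _ hmu) ?sube0 // => x.
- rewrite funenegE => hx; apply: key; apply: contra hx => /eqP ->.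
  by rewrite oppe0 maxxx.
- rewrite funeposE => hx; apply: key; apply: contra hx => /eqP ->.
  by rewrite maxxx.
Qed.

Lemma int_ge0 mu (phi : T -> \bar R) : mu set0 = 0%E ->
  (forall x, (0 <= phi x)%E) -> (0 <= \int[mu]_x phi x)%E.
Proof.
move=> mu0 phi0; rewrite /integral /=.
have hmu : forall B, measurable B -> B `<=` set0 -> mu B = 0%E.
  by move=> B _; rewrite subset0 => ->.
rewrite [X in (_ - X)%E](@sup0 _ _ _ hmu) ?sube0.
- apply: ereal_sup_ubound; exists nnsfun0 => //=.
    by move=> x; exact: funepos_ge0.
  by apply: (@sint0 _ _ nnsfun0 hmu) => x /=; rewrite eqxx.
- exact: funeneg_ge0.
- move=> x; rewrite funenegE patchE; case: ifPn => _; last by rewrite oppe0 maxxx eqxx.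
  by rewrite (_ : maxe _ _ = 0%E) ?eqxx //; apply/max_idPr; rewrite leeNl oppe0.
Qed.

End generic_int.

Set Implicit Arguments.
Unset Strict Implicit.

Fixpoint AllP (A : Type) (P : A -> Prop) (s : seq A) : Prop :=
  if s is a :: s' then P a /\ @AllP A P s' else True.

Lemma AllP_cat (A : Type) (P : A -> Prop) s1 s2 : AllP P s1 -> AllP P s2 -> AllP P (s1 ++ s2).
Proof. by elim: s1 => //= a s IH [Pa H] H2; split => //; apply: IH. Qed.

Lemma AllP_map (A B : Type) (P : B -> Prop) (f : A -> B) (Q : A -> Prop) s :
  (forall a, Q a -> P (f a)) -> AllP Q s -> AllP P (map f s).
Proof. by move=> H; elim: s => //= a s IH [Qa H2]; split; [apply: H|apply: IH]. Qed.

Section tm.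
Context (dT : measure_display) (T : measurableType dT) (R : realType).
Variable mu : set T -> \bar R.
Hypothesis mu0 : mu set0 = 0%E.

Lemma tm_set0 k : @tuple_measure _ _ _ mu k set0 = 0%E.
Proof.
elim: k => [|k IH] /=; first by rewrite asboolF.
apply: (@int0 _ _ _ _ _ set0) => [B _|x _]; first by rewrite subset0 => ->.
by rewrite (_ : [set t | _] = set0) ?IH ?eqxx.
Qed.

Lemma tm_ge0 k A : (0 <= @tuple_measure _ _ _ mu k A)%E.
Proof.
elim: k A => [|k IH] A /=; first by case: asboolP.
by apply: int_ge0.
Qed.

Variable G : (T -> R) -> Prop.
Hypothesis G_cst : forall c, G (fun _ => c).
Hypothesis G_add : forall f g, G f -> G g -> G (f \+ g).
Hypothesis G_mul : forall f g, G f -> G g -> G (f \* g).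

Fixpoint Cls (k : nat) : (k.-tuple T -> R) -> Prop :=
  match k with
  | 0%N => fun _ => True
  | k'.+1 => fun F => exists s : seq ((T -> R) * (k'.-tuple T -> R)),
      AllP (fun pr => G pr.1 /\ Cls pr.2) s /\
      forall x t, F (cons_tuple x t) = \sum_(pr <- s) pr.1 x * pr.2 t
  end.

Lemma Cls_ext k F1 F2 : F1 =1 F2 -> Cls F1 -> Cls (k:=k) F2.
Proof. by move=> /funext ->. Qed.

Lemma Cls_cst k c : Cls (k:=k) (fun _ => c).
Proof.
elim: k c => [|k IH] c //=; exists [:: (fun _ => c, fun _ => 1)]; split.
  by split => //; split; [apply: G_cst|apply: IH].
by move=> x t; rewrite big_seq1 mulr1.
Qed.

Lemma Cls_add k F1 F2 : Cls F1 -> Cls F2 -> Cls (k:=k) (F1 \+ F2).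
Proof.
case: k F1 F2 => [|k] //= F1 F2 [s1 [H1 E1]] [s2 [H2 E2]].
exists (s1 ++ s2); split; first exact: AllP_cat.
by move=> x t; rewrite big_cat /= E1 E2.
Qed.

Lemma Cls_mul k F1 F2 : Cls F1 -> Cls F2 -> Cls (k:=k) (F1 \* F2).
Proof.
elim: k F1 F2 => [|k IH] //= F1 F2 [s1 [H1 E1]] [s2 [H2 E2]].
exists [seq (pr.1 \* pr'.1, pr.2 \* pr'.2) | pr <- s1, pr' <- s2]; split.
  elim: s1 H1 {E1} => //= a s1 IHs [[Ga Ca] H1].
  apply: AllP_cat; last exact: IHs.
  apply: (AllP_map (Q := fun pr => G pr.1 /\ Cls pr.2)) H2 => b [Gb Cb].
  by split; [apply: G_mul|apply: IH].
move=> x t; rewrite big_allpairs_dep /= E1 E2 big_distrl /=.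
apply: eq_bigr => a _; rewrite big_distrr /=; apply: eq_bigr => b _.
by rewrite mulrACA.
Qed.


Lemma Cls_sum k (I : Type) (s : seq I) (F : I -> k.-tuple T -> R) :
  (forall i, Cls (F i)) -> Cls (fun t => \sum_(i <- s) F i t).
Proof.
move=> H; elim: s => [|a s IH].
  by apply: (Cls_ext _ (Cls_cst _ 0)) => t; rewrite big_nil.
by apply: (Cls_ext _ (Cls_add (H a) IH)) => t; rewrite big_cons.
Qed.

Lemma Cls_prod k (I : Type) (s : seq I) (F : I -> k.-tuple T -> R) :
  (forall i, Cls (F i)) -> Cls (fun t => \prod_(i <- s) F i t).
Proof.
move=> H; elim: s => [|a s IH].
  by apply: (Cls_ext _ (Cls_cst _ 1)) => t; rewrite big_nil.
by apply: (Cls_ext _ (Cls_mul (H a) IH)) => t; rewrite big_cons.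
Qed.

Lemma G_sum (I : Type) (s : seq I) (F : I -> T -> R) :
  (forall i, G (F i)) -> G (fun x => \sum_(i <- s) F i x).
Proof.
move=> H; elim: s => [|a s IH].
  by rewrite (_ : (fun _ => _) = fun _ => 0) //; apply/funext => x; rewrite big_nil.
rewrite (_ : (fun _ => _) = F a \+ (fun x => \sum_(i <- s) F i x)).
  exact: G_add.
by apply/funext => x; rewrite big_cons.
Qed.

Lemma Cls_coord k (i : 'I_k) g : G g -> Cls (fun t : k.-tuple T => g (tnth t i)).
Proof.
move=> Gg; elim: k i => [[]//|k IH] i /=.
have [->|ne] := eqVneq i ord0.
  exists [:: (g, fun _ => 1)]; split; first by split=> //; split=> //; exact: Cls_cst.
  by move=> x t; rewrite big_seq1 mulr1 (tnth_nth x) /=.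
have ik : (i.-1 < k)%N by rewrite prednK ?lt0n// -ltnS.
pose j := Ordinal ik.
have -> : i = lift ord0 j by apply/val_inj => /=; rewrite /bump/= add1n prednK// lt0n.
exists [:: (fun _ => 1, fun t => g (tnth t j))]; split.
  by split=> //; split; [apply: G_cst|apply: IH].
by move=> x t; rewrite big_seq1 mul1r tnthS.
Qed.

Lemma Cls_section k F x : Cls (k:=k.+1) F -> Cls (fun t => F (cons_tuple x t)).
Proof.
move=> [s [H E]].
apply: (Cls_ext (F1 := fun t => \sum_(pr <- s) pr.1 x * pr.2 t)) => [t|]; first by rewrite E.
elim: s H {E} => [_|a s IH [[Ga Ca] H]].
  by apply: (Cls_ext _ (Cls_cst _ 0)) => t; rewrite big_nil.
apply: (Cls_ext _ (Cls_add (Cls_mul (Cls_cst _ (a.1 x)) Ca) (IH H))) => t.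
by rewrite big_cons.
Qed.

Lemma G_section k F t : Cls (k:=k.+1) F -> G (fun x => F (cons_tuple x t)).
Proof.
move=> [s [H E]].
rewrite (_ : (fun _ => _) = fun x => \sum_(pr <- s) pr.1 x * pr.2 t); last first.
  by apply/funext => x; rewrite E.
elim: s H {E} => [_|a s IH [[Ga Ca] H]].
  by rewrite (_ : (fun _ => _) = fun _ => 0) //; apply/funext => x; rewrite big_nil.
rewrite (_ : (fun _ => _) = (a.1 \* (fun _ => a.2 t)) \+ (fun x => \sum_(pr <- s) pr.1 x * pr.2 t)).
  by apply: G_add; [apply: G_mul|apply: IH].
by apply/funext => x; rewrite big_cons.
Qed.

Hypothesis G_null : forall g, G g -> (exists x, g x != 0) ->
  forall B, measurable B -> B `<=` [set x | g x = 0] -> mu B = 0%E.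

Lemma Cls_null k F : Cls (k:=k) F -> (exists t, F t != 0) ->
  forall B, measurable B -> B `<=` [set t | F t = 0] -> @tuple_measure _ _ _ mu k B = 0%E.
Proof.
elim: k F => [|k IH] F.
  move=> _ [t0 Ft0] B _ BZ /=; rewrite asboolF // => /BZ /=.
  by rewrite -(tuple0 t0) => /eqP; rewrite (negbTE Ft0).
move=> CF [t0 Ft0] B mB BZ /=.
have [x0 [u0 t0E]] : exists x0 (u0 : k.-tuple T), t0 = (cons_tuple x0 u0).
  exists (thead t0), [tuple of behead t0]; apply/val_inj => /=.
  by case: t0 {Ft0} => -[|a s]//= _.
rewrite t0E in Ft0.
have Gg := G_section u0 CF.
apply: (@int0 _ _ _ _ _ [set x | F (cons_tuple x u0) = 0]).
  by apply: G_null Gg _; exists x0.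
move=> x _ hx; apply: contrapT => Fx; move/eqP: hx; apply.
apply: (IH _ (Cls_section x CF)); first by exists u0; apply/eqP.
  have := measurable_cons (measurable_cst x) (@measurable_id _ _ setT) measurableT mB.
  by rewrite setTI.
by move=> t /= /BZ.
Qed.

End tm.

Section levels.
Variable R : realType.

Lemma roots_fin (p : {poly R}) : p != 0 -> exists s : seq R, forall x, p.[x] = 0 -> x \in s.
Proof.
move=> p0; apply: contrapT => nfin.
have H : forall s : seq R, exists x, p.[x] = 0 /\ x \notin s.
  move=> s; apply: contrapT => hn; apply: nfin; exists s => x px.
  by apply: contrapT => xs; apply: hn; exists x; split => //; apply/negP.
have : forall n, exists s : seq R, [/\ uniq s, size s = n & all (root p) s].
  elim=> [|n [s [us ss rs]]]; first by exists [::].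
  have [x [px xs]] := H s.
  exists (x :: s); split => //=; first by rewrite xs.
  - by rewrite ss.
  - by rewrite rs andbT; apply/eqP.
move=> /(_ (size p)) [s [us ss rs]].
by have := max_poly_roots p0 rs us; rewrite ss ltnn.
Qed.

Definition G1 (g : measurableTypeR R -> R) := exists p : {poly R}, forall x, g x = p.[x].

Lemma G1_cst c : G1 (fun _ => c).
Proof. by exists c%:P => x; rewrite hornerC. Qed.
Lemma G1_add f g : G1 f -> G1 g -> G1 (f \+ g).
Proof. by move=> [p hp] [q hq]; exists (p + q) => x; rewrite hornerD /= hp hq. Qed.
Lemma G1_mul f g : G1 f -> G1 g -> G1 (f \* g).
Proof. by move=> [p hp] [q hq]; exists (p * q) => x; rewrite hornerM /= hp hq. Qed.
Lemma G1_X e : G1 (fun x => x ^+ e).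
Proof. by exists ('X ^+ e) => x; rewrite hornerXn. Qed.

Lemma G1_null g : G1 g -> (exists x, g x != 0) ->
  forall B, measurable B -> B `<=` [set x | g x = 0] -> (@lebesgue_measure R) B = 0%E.
Proof.
move=> [p hp] [x0 gx0] B _ BZ.
have p0 : p != 0 by apply: contraNneq gx0 => p0; rewrite hp p0 horner0.
have [s hs] := roots_fin p0.
apply: countable_lebesgue_measure0; apply: finite_set_countable.
apply: (sub_finite_set _ (finite_seq s)) => x /BZ /=; rewrite hp => /hs.
by [].
Qed.


Definition Cv d := @Cls _ (measurableTypeR R) R G1 d.

Lemma vec_null d F : Cv F -> (exists t, F t != 0) ->
  forall B, measurable B -> B `<=` [set t | F t = 0] -> @lebesgue_vec R d B = 0%E.
Proof.
move=> CF ex B mB BZ; rewrite /lebesgue_vec.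
by apply: (Cls_null G1_cst G1_add G1_mul G1_null CF ex mB BZ).
Qed.

Definition Cm d N := @Cls _ (d.-tuple (measurableTypeR R)) R (@Cv d) N.

Lemma lebvec0 d : @lebesgue_vec R d set0 = 0%E.
Proof. by apply: tm_set0; apply: measure0. Qed.

Lemma mat_null d N F : Cm (d:=d) (N:=N) F -> (exists t, F t != 0) ->
  forall B, measurable B -> B `<=` [set t | F t = 0] -> @lebesgue_mat R d N B = 0%E.
Proof.
move=> CF ex B mB BZ; rewrite /lebesgue_mat.
have Gc : forall c, Cv (d:=d) (fun _ => c) by move=> c; apply: Cls_cst; apply: G1_cst.
have Ga : forall f g, Cv f -> Cv g -> Cv (d:=d) (f \+ g) by move=> f g; apply: Cls_add.
have Gm : forall f g, Cv f -> Cv g -> Cv (d:=d) (f \* g).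
  by move=> f g; apply: Cls_mul; apply: G1_mul.
have Gn : forall g, Cv (d:=d) g -> (exists x, g x != 0) ->
  forall B', measurable B' -> B' `<=` [set x | g x = 0] -> @lebesgue_vec R d B' = 0%E.
  by move=> g Cg exg B' mB' BZ'; apply: (vec_null Cg exg mB' BZ').
exact: (Cls_null Gc Ga Gm Gn CF ex mB BZ).
Qed.

End levels.

Import -(notations) mpoly.

Lemma sum_supp (R : nmodType) (T : eqType) (s1 s2 : seq T) (F : T -> R) :
  uniq s1 -> uniq s2 -> {subset s1 <= s2} ->
  (forall x, x \in s2 -> x \notin s1 -> F x = 0) ->
  \sum_(x <- s1) F x = \sum_(x <- s2) F x.
Proof.
move=> u1 u2 sub H; rewrite [RHS](bigID (mem s1)) /= [X in _ + X]big1_seq ?addr0; last first.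
  by move=> x /andP [xn xs]; apply: H xs xn.
rewrite -[RHS]big_filter; apply: perm_big; apply: uniq_perm => //; first exact: filter_uniq.
by move=> x; rewrite mem_filter; apply/idP/andP => [xs|[]//]; split => //; apply: sub.
Qed.

Section alg.
Variable R : realType.
Variables D n : nat.

Definition bas : seq (multinom D) := [seq s2m (val t) | t <- enum (basis D n)].
Local Notation N := (size bas).
Definition bj (j : 'I_N) : multinom D := nth (@mnm0 D) bas j.
Definition mon (v : 'I_D -> R) (m : multinom D) : R := \prod_(l < D) v l ^+ m l.
Local Notation hom k := (ishomog1 (n:=D) (R:=R) k mdeg).

Lemma bas_uniq : uniq bas. Proof. exact: uniq_basis. Qed.
Lemma bas_cover m : (mdeg m == n) = (m \in bas). Proof. exact: basis_cover. Qed.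
Lemma bj_inj (i j : 'I_N) : (bj i == bj j) = (i == j).
Proof. by rewrite /bj nth_uniq ?bas_uniq. Qed.
Lemma bj_deg j : mdeg (bj j) = n.
Proof. by apply/eqP; rewrite bas_cover mem_nth. Qed.

Lemma meval_homog (q : rpoly D R) v : q \is hom n ->
  meval v q = \sum_(j < N) mcoeff (bj j) q * mon v (bj j).
Proof.
move=> hq; rewrite mevalE (@sum_supp _ _ _ bas) ?msupp_uniq ?bas_uniq //.
- by rewrite (big_nth (@mnm0 D)) big_mkord.
- by move=> m /(dhomog_mf hq) /eqP; rewrite bas_cover.
- by move=> m _ /memN_msupp_eq0 ->; rewrite mul0r.
Qed.

Lemma meval_scale (q : rpoly D R) k v lam : q \is hom k ->
  meval (fun l => lam * v l) q = lam ^+ k * meval v q.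
Proof.
move=> hq; rewrite !mevalE mulr_sumr; apply: eq_big_seq => m /(dhomog_mf hq) mk.
rewrite mulrCA; congr (_ * _).
under eq_bigr do rewrite exprMn.
by rewrite big_split /= prodrXr -mdegE mk.
Qed.

Definition polyOf (c : 'I_N -> R) : rpoly D R := \sum_(j < N) c j *: mpolyX R (bj j).

Lemma polyOf_coef c i : mcoeff (bj i) (polyOf c) = c i.
Proof.
rewrite /polyOf raddf_sum (bigD1 i) //= mcoeffZ mcoeffX eqxx mulr1 big1 ?addr0 //.
by move=> j ji; rewrite mcoeffZ mcoeffX bj_inj (negbTE ji) mulr0.
Qed.

Lemma polyOf_hom c : polyOf c \is hom n.
Proof.
by apply: rpred_sum => j _; apply: rpredZ; rewrite dhomogX; apply/eqP; exact: bj_deg.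
Qed.

Lemma polyOf_eval c v : meval v (polyOf c) = \sum_(j < N) c j * mon v (bj j).
Proof.
by rewrite /polyOf raddf_sum; apply: eq_bigr => j _ /=; rewrite mevalZ mevalX.
Qed.

Lemma polyOf_neq0 c : (exists i, c i != 0) -> polyOf c != 0.
Proof.
by move=> [i ci]; apply: contraNneq ci => h; rewrite -polyOf_coef h mcoeff0.
Qed.

Lemma homog_msize (q : rpoly D R) : q != 0 -> q \is hom n -> msize q = n.+1.
Proof.
move=> q0 hq; rewrite msizeE; apply/eqP; rewrite eq_le; apply/andP; split.
  by apply/bigmax_leqP_seq => m /(dhomog_mf hq) -> _.
by rewrite -(dhomog_mf hq (mlead_supp q0)); apply: (leq_bigmax_seq _ (mlead_supp q0)).
Qed.

Definition Emat M (V : M.-tuple (D.-tuple R)) : 'M[R]_(M, N) :=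
  \matrix_(i < M, j < N) mon (tnth (tnth V i)) (bj j).

Lemma Emat_mul M (V : M.-tuple (D.-tuple R)) (c : 'cV[R]_N) i :
  (Emat V *m c) i 0 = meval (tnth (tnth V i)) (polyOf (fun j => c j 0)).
Proof.
rewrite polyOf_eval !mxE; apply: eq_bigr => j _; rewrite mxE mulrC.
by [].
Qed.


Lemma Emat_mulE M (V : M.-tuple (D.-tuple R)) (c : 'cV[R]_N) i :
  (Emat V *m c) i 0 = \sum_(j < N) mon (tnth (tnth V i)) (bj j) * c j 0.
Proof. by rewrite !mxE; apply: eq_bigr => j _; rewrite mxE. Qed.

Lemma homog_zero (V : N.-tuple (D.-tuple R)) (q : rpoly D R) :
  \det (Emat V) != 0 -> q \is hom n ->
  (forall i, meval (tnth (tnth V i)) q = 0) -> q = 0.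
Proof.
move=> dV hq qV.
pose c : 'cV[R]_N := \col_j mcoeff (bj j) q.
have Ec : Emat V *m c = 0.
  apply/matrixP => i j; rewrite ord1 Emat_mulE [RHS]mxE -[RHS](qV i) (meval_homog _ hq).
  by apply: eq_bigr => k _; rewrite mxE mulrC.
have c0 : c = 0.
  have uV : Emat V \in unitmx by rewrite unitmxE unitfE.
  by rewrite -(mulKmx uV c) Ec mulmx0.
apply/mpolyP => m; rewrite mcoeff0.
have [md|md] := boolP (mdeg m == n); last exact: (dhomog_nemf_coeff hq).
move: md; rewrite bas_cover => mb.
have im : (index m bas < N)%N by rewrite index_mem.
have -> : m = bj (Ordinal im) by rewrite /bj /= nth_index.
by have /matrixP/(_ (Ordinal im) 0) := c0; rewrite !mxE.
Qed.

Lemma kernel M (B : 'M[R]_(M, N)) : (M < N)%N -> exists c : 'cV[R]_N, c != 0 /\ B *m c = 0.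
Proof.
move=> MN; pose K := kermx B^T.
have rK : (0 < \rank K)%N.
  by rewrite /K mxrank_ker subn_gt0 (leq_ltn_trans (rank_leq_col _)).
have [i Ki] : exists i, row i K != 0.
  apply: contrapT => h; move: rK; rewrite lt0n mxrank_eq0 => /negP; apply.
  apply/eqP/row_matrixP => i; rewrite row0; apply/eqP; apply: contrapT => hi.
  by apply: h; exists i; apply/negP.
exists (row i K)^T; split; first by rewrite trmx_eq0.
by rewrite -[B in B *m _]trmxK -trmx_mul -row_mul mulmx_ker row0 trmx0.
Qed.

End alg.

Section poly_roots.
Variable R : realType.

Lemma poly_nonroot (P : {poly R}) : P != 0 -> exists t, P.[t] != 0.
Proof.
move=> P0; apply: contrapT => h.
have rt : forall t, root P t by move=> t; apply/negPn/negP => ht; apply: h; exists t.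
pose s := [seq (i%:R : R) | i <- iota 0 (size P)].
have us : uniq s by rewrite map_inj_uniq ?iota_uniq // => i j /eqP; rewrite eqr_nat => /eqP.
have := max_poly_roots P0 (introT allP (fun t _ => rt t)) us.
by rewrite size_map size_iota ltnn.
Qed.

Lemma poly_allroot (P : {poly R}) : (forall t, P.[t] = 0) -> P = 0.
Proof.
by move=> h; apply: contrapT => /eqP /poly_nonroot [t]; rewrite h eqxx.
Qed.


Lemma enc_inj K k (f g : 'I_k -> nat) : (forall i, f i < K)%N -> (forall i, g i < K)%N ->
  (\sum_(i < k) K ^ i * f i = \sum_(i < k) K ^ i * g i)%N -> forall i, f i = g i.
Proof.
elim: k f g => [|k IH] f g hf hg; first by move=> _ [].
rewrite !big_ord_recl /= !expn0 !mul1n.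
have sh : forall h : 'I_k.+1 -> nat, (\sum_(i < k) K ^ bump 0 i * h (lift ord0 i) =
   (\sum_(i < k) K ^ i * h (lift ord0 i)) * K)%N.
  move=> h; rewrite big_distrl /=; apply: eq_bigr => i _.
  by rewrite /bump leq0n add1n expnS -mulnA mulnC.
rewrite !sh => E.
have K0 : (0 < K)%N by apply: leq_ltn_trans (leq0n _) (hf ord0).
have E' : ((\sum_(i < k) K ^ i * f (lift ord0 i)) * K + f ord0 =
           (\sum_(i < k) K ^ i * g (lift ord0 i)) * K + g ord0)%N.
  by rewrite addnC E addnC.
have h0 : f ord0 = g ord0.
  by move: (congr1 (modn^~ K) E') => /=; rewrite !modnMDl !modn_small.
have h1 := congr1 (divn^~ K) E'; rewrite /= !divnMDl // !divn_small // !addn0 in h1.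
have IH' := IH (f \o lift ord0) (g \o lift ord0) (fun i => hf _) (fun i => hg _) h1.
by move=> i; case: (unliftP ord0 i) => [j ->|->] //; apply: IH'.
Qed.

Lemma nonroot k (p : rpoly k R) : p != 0 -> exists v : 'I_k -> R, meval v p != 0.
Proof.
move=> p0; set K := msize p.
pose enc (m : multinom k) := (\sum_(i < k) K ^ i * m i)%N.
pose P : {poly R} := \sum_(m <- msupp p) mcoeff m p *: 'X^(enc m).
have bnd : forall m, m \in msupp p -> forall i, (m i < K)%N.
  move=> m ms i; apply: leq_ltn_trans (msize_mdeg_lt ms).
  by rewrite mdegE (bigD1 i) //= leq_addr.
have Pev : forall t, P.[t] = meval (fun i => t ^+ (K ^ i)) p.
  move=> t; rewrite mevalE horner_sum; apply: eq_bigr => m _.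
  rewrite hornerZ hornerXn; congr (_ * _).
  by rewrite /enc -prodrXr; apply: eq_bigr => i _; rewrite exprM.
have P0 : P != 0.
  have m0s := mlead_supp p0.
  apply/negP => /eqP P0'; have := congr1 (fun Q : {poly R} => Q`_(enc (mlead p))) P0'.
  rewrite coef0 coef_sum (bigD1_seq (mlead p)) ?msupp_uniq //= coefZ coefXn eqxx mulr1.
  rewrite big1_seq ?addr0; first by move=> h; move: m0s; rewrite mcoeff_msupp h eqxx.
  move=> m /andP [mne ms]; rewrite coefZ coefXn.
  case: eqP => [/esym he|_]; last by rewrite mulr0.
  have /mnmP em := enc_inj (bnd _ ms) (bnd _ m0s) he.
  by move: mne; rewrite em eqxx.
have [t Pt] := poly_nonroot P0; exists (fun i => t ^+ (K ^ i)); by rewrite -Pev.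
Qed.

End poly_roots.

Section alg2.
Variable R : realType.
Variables D n : nat.
Local Notation N := (size (bas D n)).
Local Notation hom k := (ishomog1 (n:=D) (R:=R) k mdeg).

Lemma det_determining (i0 : 'I_D) (V : N.-tuple (D.-tuple R)) :
  \det (Emat n V) != 0 -> determining n V.
Proof.
move=> dV p hp; split => [-> lam i|hv]; first by rewrite /eval_line meval0.
have hp' : (msize p <= n.+1)%N by [].
have hk : forall k, (k < n.+1)%N -> pihomog mdeg k p = 0.
  move=> k kn.
  have vk : forall i, meval (tnth (tnth V i)) (pihomog mdeg k p) = 0.
    move=> i; pose v := tnth (tnth V i).
    pose Q : {poly R} := \poly_(k < n.+1) meval v (pihomog mdeg k p).
    have Q0 : Q = 0.
      apply: poly_allroot => lam; rewrite horner_poly.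
      have := hv lam i; rewrite /eval_line {1}(pihomog_partitionE hp') raddf_sum => h.
      rewrite -[RHS]h; apply: eq_bigr => j _ /=.
      by rewrite (meval_scale _ _ (pihomogP _ _ _)) mulrC.
    by have := congr1 (fun Q1 : {poly R} => Q1`_k) Q0; rewrite coef_poly kn coef0.
  pose X0 : rpoly D R := mpolyX R (mnm1 i0).
  have hq : pihomog mdeg k p * X0 ^+ (n - k) \is hom n.
    rewrite -{2}(subnKC (ltnSE kn)); apply: dhomogM; first exact: pihomogP.
    have hX : X0 \is hom 1 by rewrite dhomogX; apply/eqP; exact: mdeg1.
    by have := dhomogMn (n - k) hX; rewrite mul1n.
  have := homog_zero dV hq => /(_ _) q0.
  have : pihomog mdeg k p * X0 ^+ (n - k) = 0.
    by apply: q0 => i; rewrite mevalM vk mul0r.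
  move/eqP; rewrite mulf_eq0 expf_eq0 => /orP [/eqP //|/andP [_ /eqP X00]].
  by have := congr1 (mcoeff (mnm1 i0)) X00; rewrite mcoeffX eqxx mcoeff0 => /eqP; rewrite oner_eq0.
rewrite (pihomog_partitionE hp') big1 // => k _; exact: hk.
Qed.

Lemma partII M (V : M.-tuple (D.-tuple R)) : (M < N)%N ->
  exists p : rpoly D R, p != 0 /\ msize_ p = n.+1 /\ vanishes_on_lines p V.
Proof.
move=> MN; have [c [c0 Bc]] := kernel (Emat n V) MN.
have cne : exists i, c i 0 != 0.
  apply: contrapT => h; move/negP: c0; apply; apply/eqP/matrixP => i j.
  rewrite ord1 mxE; apply/eqP; apply: contrapT => hi; apply: h; exists i; exact/negP.
have q0 := polyOf_neq0 cne.
exists (polyOf (fun j => c j 0)); split => //; split.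
  exact: homog_msize q0 (polyOf_hom _).
move=> lam i; rewrite /eval_line (meval_scale _ _ (polyOf_hom _)) -Emat_mul Bc mxE mulr0.
by [].
Qed.

Lemma rowfree_inj m k (A : 'M[R]_(m, k)) : (forall u : 'rV_m, u *m A = 0 -> u = 0) -> row_free A.
Proof.
move=> H; rewrite -kermx_eq0; apply/eqP/row_matrixP => i; rewrite row0; apply: H.
by rewrite -row_mul mulmx_ker row0.
Qed.

Lemma exists_rowfree k : (k <= N)%N -> exists V : k.-tuple (D.-tuple R), row_free (Emat n V).
Proof.
elim: k => [|k IH] hk.
  have h0 := rank_leq_row (Emat n ([tuple] : 0.-tuple (D.-tuple R))).
  exists [tuple]; rewrite /row_free; move: h0.
  by case: (\rank _).
have [V hV] := IH (ltnW hk).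
have [c [c0 Bc]] := kernel (Emat n V) hk.
have cne : exists i, c i 0 != 0.
  apply: contrapT => h; move/negP: c0; apply; apply/eqP/matrixP => i j.
  rewrite ord1 mxE; apply/eqP; apply: contrapT => hi; apply: h; exists i; exact/negP.
have [v qv] := nonroot (polyOf_neq0 cne).
pose w : D.-tuple R := [tuple v l | l < D].
have tw : tnth w = v by apply/funext => l; rewrite tnth_mktuple.
exists (cons_tuple w V); apply: rowfree_inj => u uA.
pose x0 := u 0 ord0.
pose u' : 'rV_k := \row_i u 0 (lift ord0 i).
have key : forall j, (u *m Emat n (cons_tuple w V)) 0 j =
    x0 * mon v (bj j) + (u' *m Emat n V) 0 j.
  move=> j; rewrite !mxE big_ord_recl !mxE; congr (_ + _).
    by rewrite (tnth_nth w) /= -tw.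
  by apply: eq_bigr => i _; rewrite !mxE tnthS.
have x00 : x0 = 0.
  have := congr1 (fun B => (B *m c) 0 0) uA => /=; rewrite mul0mx [X in _ = X]mxE mxE.
  rewrite (eq_bigr (fun j => (x0 * mon v (bj j) + (u' *m Emat n V) 0 j) * c j 0)); last first.
    by move=> j _; rewrite key.
  under eq_bigr do rewrite mulrDl -mulrA.
  rewrite big_split /= -mulr_sumr.
  have -> : \sum_(j < N) (u' *m Emat n V) 0 j * c j 0 = ((u' *m Emat n V) *m c) 0 0.
    by rewrite mxE.
  rewrite -mulmxA Bc mulmx0 mxE addr0.
  have -> : \sum_(j < N) mon v (bj j) * c j 0 = meval v (polyOf (fun j => c j 0)).
    by rewrite polyOf_eval; apply: eq_bigr => j _; rewrite mulrC.
  by move/eqP; rewrite mulf_eq0 (negbTE qv) orbF => /eqP.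
have u'0 : u' = 0.
  apply: (row_free_inj hV); rewrite mul0mx; apply/matrixP => i j; rewrite ord1.
  have := key j; rewrite uA x00 mul0r add0r => <-.
  by rewrite !mxE.
apply/matrixP => i j; rewrite ord1 [RHS]mxE; case: (unliftP ord0 j) => [l ->|->]; last exact: x00.
by have := congr1 (fun B : 'rV_k => B 0 l) u'0; rewrite !mxE.
Qed.

Lemma exists_good : exists V : N.-tuple (D.-tuple R), \det (Emat n V) != 0.
Proof.
have [V hV] := exists_rowfree (leqnn N); exists V.
by move: hV; rewrite row_free_unit unitmxE unitfE.
Qed.

End alg2.

Section meas_closure.
Context (dT : measure_display) (T : measurableType dT) (R : realType).
Lemma meas_sum (I : Type) (s : seq I) (F : I -> T -> R) :
  (forall i, measurable_fun setT (F i)) -> measurable_fun setT (fun t => \sum_(i <- s) F i t).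
Proof.
move=> H; elim: s => [|a s IH].
  by rewrite (_ : (fun _ => _) = cst 0); [exact: measurable_cst|apply/funext => t; rewrite big_nil].
rewrite (_ : (fun _ => _) = F a \+ (fun t => \sum_(i <- s) F i t)).
  exact: measurable_realfun.measurable_funD.
by apply/funext => t; rewrite big_cons.
Qed.
Lemma meas_prod (I : Type) (s : seq I) (F : I -> T -> R) :
  (forall i, measurable_fun setT (F i)) -> measurable_fun setT (fun t => \prod_(i <- s) F i t).
Proof.
move=> H; elim: s => [|a s IH].
  by rewrite (_ : (fun _ => _) = cst 1); [exact: measurable_cst|apply/funext => t; rewrite big_nil].
rewrite (_ : (fun _ => _) = F a \* (fun t => \prod_(i <- s) F i t)).
  exact: measurable_realfun.measurable_funM.
by apply/funext => t; rewrite big_cons.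
Qed.
End meas_closure.

Section final.
Variable R : realType.
Variables d' n : nat.
Local Notation D := d'.+1.
Local Notation N := (size (bas D n)).

Definition detfun (V : N.-tuple (D.-tuple R)) : R := \det (Emat n V).

Lemma detfun_cls : @Cm R D N detfun.
Proof.
have Gc : forall c, @Cv R D (fun _ => c) by move=> c; apply: Cls_cst; apply: G1_cst.
have Ga : forall f g : D.-tuple (measurableTypeR R) -> R, @Cv R D f -> @Cv R D g -> @Cv R D (f \+ g).
  by move=> f g; apply: Cls_add.
have Gm : forall f g : D.-tuple (measurableTypeR R) -> R, @Cv R D f -> @Cv R D g -> @Cv R D (f \* g).
  by move=> f g; apply: Cls_mul; apply: G1_mul.
rewrite /Cm /detfun /determinant.
apply: Cls_sum => // s; apply: Cls_mul => //; first exact: Cls_cst.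
apply: Cls_prod => // i.
rewrite (_ : (fun t => _) = (fun V : N.-tuple (D.-tuple (measurableTypeR R)) => mon (tnth (tnth V i)) (bj (perm.fun_of_perm s i)))); last first.
  by apply/funext => V; rewrite mxE.
apply: (Cls_coord Gc i (g := fun w : D.-tuple (measurableTypeR R) => mon (tnth w) (bj (perm.fun_of_perm s i)))).
rewrite /Cv /mon; apply: Cls_prod => //; [exact: G1_cst|exact: G1_mul|] => l.
apply: (Cls_coord (@G1_cst R) l (g := fun x => x ^+ bj (perm.fun_of_perm s i) l)); exact: G1_X.
Qed.

Lemma detfun_meas : measurable_fun setT detfun.
Proof.
rewrite /detfun /determinant.
apply: meas_sum => s; apply: measurable_realfun.measurable_funM; first exact: measurable_cst.
apply: meas_prod => i.
rewrite (_ : (fun t => _) = (fun V : N.-tuple (D.-tuple R) => \prod_l (tnth (tnth V i) l) ^+ (bj (perm.fun_of_perm s i) l))); last first.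
  by apply/funext => V; rewrite mxE.
apply: meas_prod => l; apply: measurable_realfun.measurable_funX.
apply: (measurableT_comp (measurable_tnth l)); exact: measurable_tnth.
Qed.

End final.


Lemma main (R : realType) (d' n : nat) :
  let N := size (bas d'.+1 n) in
  ((forall (dO : measure_display) (Omega : measurableType dO)
       (P : probability Omega R) (X : Omega -> N.-tuple (d'.+1.-tuple R)),
       measurable_fun setT X ->
       has_density P X (@lebesgue_mat R d'.+1 N) ->
       {ae P, forall w, determining n (X w)})
   /\ (exists V : N.-tuple (d'.+1.-tuple R), determining n V))
  /\
  (forall (M : nat), (M < N)%N -> forall V : M.-tuple (d'.+1.-tuple R),
     exists p : rpoly d'.+1 R,
       p != 0 /\ msize_ p = n.+1 /\ vanishes_on_lines p V).
Proof.
move=> N; split; [split|].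
- move=> dO Omega P X mX [f [f0 [mf hf]]].
  pose Z := [set V : N.-tuple (d'.+1.-tuple R) | detfun V = 0].
  have mZ : measurable Z.
    by have := @detfun_meas R d' n measurableT _ (measurable_set1 (0:R)); rewrite setTI.
  exists (X @^-1` Z); split.
  + by have := mX measurableT Z mZ; rewrite setTI.
  + rewrite hf //; apply: (@int0 _ _ _ _ _ Z).
      move=> B mB BZ.
      have mB' : measurable (B : set (N.-tuple (d'.+1.-tuple (measurableTypeR R)))) := mB.
      apply: (mat_null (detfun_cls R d' n) _ mB' BZ).
      by have [V hV] := exists_good R d'.+1 n; exists V.
    by move=> x Zx _.
  + move=> w /= hw; apply: contrapT => dz; apply: hw.
    have hd : \det (Emat n (X w)) != 0 by apply/eqP.
    exact: (det_determining ord0 hd).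
- by have [V hV] := exists_good R d'.+1 n; exists V; exact: (det_determining ord0 hV).
- by move=> M MN V; exact: partII.
Qed.

Unset Implicit Arguments.

Theorem theorem3p13 (R : realType) (d n : nat) (hd : (1 <= d)%N) :
  let N := 'C(n + d - 1, n) in
  (* (I) *)
  ((forall (dO : measure_display) (Omega : measurableType dO)
       (P : probability Omega R) (X : Omega -> N.-tuple (d.-tuple R)),
       measurable_fun setT X ->
       has_density P X (@lebesgue_mat R d N) ->
       {ae P, forall w, determining n (X w)})
   /\ (exists V : N.-tuple (d.-tuple R), determining n V))
  /\
  (* (II) *)
  (forall (M : nat), (M < N)%N -> forall V : M.-tuple (d.-tuple R),
     exists p : rpoly d R,
       p != 0 /\ msize_ p = n.+1 /\ vanishes_on_lines p V).
Proof.
case: d hd => [//|d'] _.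
have hN : 'C(n + d'.+1 - 1, n) = size (bas d'.+1 n).
  by rewrite addnS subn1 /=; symmetry; exact: size_basis.
rewrite hN.
exact: main.
Qed.
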